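(* Let $\alpha$ be a relation on a set $X$ such that either (1) $\alpha$ is short, or (2) the set $\langle\alpha\rangle^*$ has the constant domains property. Then $\bigcap\langle\alpha\rangle^*$ is cotransitive (i.e. $\alpha$ is admissible).
   Context: Constructive (intuitionistic) mathematics. The filled product of relations $\alpha,\beta$ on $X$ is $\alpha*\beta=\{(x,y)\mid \forall_{z\in X}(x\alpha z\vee z\beta y)\}$. $\langle\alpha\rangle^*$ is the smallest set of relations on $X$ containing $\alpha$ and closed under $*$; $\bigcap\langle\alpha\rangle^*$ is the intersection of all its members. $\alpha$ is short if there are $n\ge1$ and $\beta_1,\dots,\beta_n\in\langle\alpha\rangle^*$ with $\bigcap\langle\alpha\rangle^*=\beta_1\cap\cdots\cap\beta_n$. A set $Y$ has the constant domains property if $\forall_{y\in Y}(P(y)\vee Q)\Rightarrow(\forall_{y\in Y}P(y))\vee Q$ for all predicates $P(y)$ and propositions $Q$ not containing $y$ free. A relation $\kappa$ is cotransitive if $x\kappa z\Rightarrow(x\kappa y\vee y\kappa z)$ for all $x,y,z$. *)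

(* Defs.v *)
Definition relation (X : Type) := X -> X -> Prop.

Definition filled_prod {X : Type} (a b : relation X) : relation X :=
  fun x y => forall z : X, a x z \/ b z y.

Inductive gen_star {X : Type} (a : relation X) : relation X -> Prop :=
  | gen_base : gen_star a a
  | gen_prod : forall b c : relation X,
      gen_star a b -> gen_star a c -> gen_star a (filled_prod b c).

Definition bigcap_star {X : Type} (a : relation X) : relation X :=
  fun x y => forall b : relation X, gen_star a b -> b x y.

Definition short {X : Type} (a : relation X) : Prop :=
  exists (n : nat) (b : nat -> relation X),
    1 <= n /\
    (forall i, i < n -> gen_star a (b i)) /\
    (forall x y : X, bigcap_star a x y <-> (forall i, i < n -> b i x y)).

Definition constant_domains {Y : Type} (S : Y -> Prop) : Prop :=
  forall (P : Y -> Prop) (Q : Prop),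
    (forall y : Y, S y -> P y \/ Q) -> (forall y : Y, S y -> P y) \/ Q.

Definition cotransitive {X : Type} (k : relation X) : Prop :=
  forall x y z : X, k x z -> k x y \/ k y z.

(* Main.v *)
Require Import Defs.
From Stdlib Require Import Lia.

Lemma fin1 (R : Prop) (Q : nat -> Prop) : forall m,
  (forall j, j < m -> R \/ Q j) -> R \/ (forall j, j < m -> Q j).
Proof.
  induction m as [|m IH]; intros H.
  - right; intros; lia.
  - destruct (IH (fun j hj => H j ltac:(lia))) as [r|hq]; [left; exact r|].
    destruct (H m ltac:(lia)) as [r|q]; [left; exact r|].
    right; intros j hj. destruct (PeanoNat.Nat.eq_dec j m); [subst; exact q|].
    apply hq; lia.
Qed.

Lemma fin2 (P Q : nat -> Prop) m : forall n,
  (forall i j, i < n -> j < m -> P i \/ Q j) ->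
  (forall i, i < n -> P i) \/ (forall j, j < m -> Q j).
Proof.
  induction n as [|n IH]; intros H.
  - left; intros; lia.
  - destruct (IH (fun i j hi hj => H i j ltac:(lia) hj)) as [hp|hq]; [|right; exact hq].
    destruct (fin1 (P n) Q m (fun j hj => H n j ltac:(lia) hj)) as [p|hq]; [|right; exact hq].
    left; intros i hi. destruct (PeanoNat.Nat.eq_dec i n); [subst; exact p|].
    apply hp; lia.
Qed.

Theorem mainTheorem5 (X : Type) (a : relation X) :
  short a \/ constant_domains (gen_star a) ->
  cotransitive (bigcap_star a).
Proof.
  intros [[n [b [Hn [Hg Heq]]]] | CD] x y z Hxz.
  - destruct (fin2 (fun i => b i x y) (fun j => b j y z) n n) as [h|h].
    + intros i j hi hj. exact (Hxz _ (gen_prod a _ _ (Hg i hi) (Hg j hj)) y).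
    + left; apply Heq; exact h.
    + right; apply Heq; exact h.
  - assert (H1 : forall c, gen_star a c -> bigcap_star a x y \/ c y z).
    { intros c hc.
      destruct (CD (fun b => b x y) (c y z)) as [h|h].
      + intros b hb. exact (Hxz _ (gen_prod a _ _ hb hc) y).
      + left; exact h.
      + right; exact h. }
    destruct (CD (fun c => c y z) (bigcap_star a x y) (fun c hc => proj1 (or_comm _ _) (H1 c hc))) as [h|h].
    + right; exact h.
    + left; exact h.
Qed.
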